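(* Let $1\le r\le n$, let $I=(x_1,\ldots,x_r)\subset S=K[x_1,\ldots,x_n]$, and let $J\subsetneq I$ be a nonzero square free monomial ideal generated by square free monomials of degrees $\geq 2$. Suppose every square free monomial of degree $2$ lying in $I\setminus J$ belongs to $K[x_1,\ldots,x_r]$. Then $\operatorname{depth}_S I/J=1$ (no assumption relating $r$ and the number of such degree-$2$ monomials is needed).
   Context: $S=K[x_1,\ldots,x_n]$ is the polynomial ring over a field $K$; depth is taken over $S$. *)

(* Defs.v *)
From HB Require Import structures.
From mathcomp Require Import all_boot all_order all_algebra.
From mathcomp Require Import mpoly.
Set Implicit Arguments. Unset Strict Implicit. Unset Printing Implicit Defensive.
Import GRing.Theory.
Local Open Scope ring_scope.

(* S = K[x_1,...,x_n] is {mpoly K[n]}; the variable x_{i+1} is 'X_i, i : 'I_n. *)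

Section Defs.
Variables (K : fieldType) (n : nat).
Notation S := {mpoly K[n]}.

Definition in_ideal (gs : seq S) (p : S) : Prop :=
  exists cs : seq S, p = \sum_(i < size gs) cs`_i * gs`_i.

Definition var_gens (r : nat) : seq S :=
  map (fun i : 'I_n => 'X_i) [seq i <- enum 'I_n | (nat_of_ord i < r)%N].

Definition monom_gens (ms : seq 'X_{1..n}) : seq S := [seq 'X_[m] | m <- ms].

Definition squarefree (m : 'X_{1..n}) : Prop := forall i : 'I_n, (m i <= 1)%N.

Definition in_max_ideal (p : S) : Prop := p@_0 = 0.

(* For the module M = I/J (I, J ideals given by generators, J ⊆ I),
   submodule_rep Ig Jg fs p  means: p ∈ I represents an element of
   (f_1,...,f_k) M, i.e. p ∈ J + f_1 I + ... + f_k I. *)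
Definition in_fsM (Ig Jg fs : seq S) (p : S) : Prop :=
  exists a : seq S, (forall i, (i < size fs)%N -> in_ideal Ig a`_i) /\
    in_ideal Jg (p - \sum_(i < size fs) fs`_i * a`_i).

Definition quot_regular_seq (Ig Jg fs : seq S) : Prop :=
  (forall k, (k < size fs)%N -> forall u, in_ideal Ig u ->
      in_fsM Ig Jg (take k fs) (fs`_k * u) -> in_fsM Ig Jg (take k fs) u)
  /\ (exists u, in_ideal Ig u /\ ~ in_fsM Ig Jg fs u).

Definition quot_depth_is (Ig Jg : seq S) (d : nat) : Prop :=
  (exists fs : seq S, size fs = d /\ (forall f, f \in fs -> in_max_ideal f)
      /\ quot_regular_seq Ig Jg fs) /\
  (forall fs : seq S, (forall f, f \in fs -> in_max_ideal f) ->
      quot_regular_seq Ig Jg fs -> (size fs <= d)%N).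

End Defs.

(* Main.v *)
Require Import Defs.
From HB Require Import structures.
From mathcomp Require Import all_boot all_order all_algebra.
From mathcomp Require Import mpoly.
From mathcomp Require Import ring.
Set Implicit Arguments. Unset Strict Implicit. Unset Printing Implicit Defensive.
Import GRing.Theory.
Local Open Scope ring_scope.

Section Aux.
Variables (K : fieldType) (n : nat).
Notation S := {mpoly K[n]}.
Implicit Types (p q : S) (gs : seq S).

Lemma in_idealP gs p : in_ideal gs p <-> exists c : nat -> S, p = \sum_(i < size gs) c i * gs`_i.
Proof.
split=> [[cs ->]|[c ->]]; first by exists (fun i => cs`_i).
exists (mkseq c (size gs)); apply: eq_bigr => i _; by rewrite nth_mkseq.
Qed.

Lemma ideal0 gs : in_ideal gs 0.
Proof. apply/in_idealP; exists (fun _ => 0); by rewrite big1 // => i _; rewrite mul0r. Qed.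

Lemma idealD gs p q : in_ideal gs p -> in_ideal gs q -> in_ideal gs (p + q).
Proof.
move=> /in_idealP[c1 ->] /in_idealP[c2 ->]; apply/in_idealP; exists (fun i => c1 i + c2 i).
by rewrite -big_split; apply: eq_bigr => i _; rewrite mulrDl.
Qed.

Lemma idealM gs s p : in_ideal gs p -> in_ideal gs (s * p).
Proof.
move=> /in_idealP[c ->]; apply/in_idealP; exists (fun i => s * c i).
by rewrite mulr_sumr; apply: eq_bigr => i _; rewrite mulrA.
Qed.

Lemma idealN gs p : in_ideal gs p -> in_ideal gs (- p).
Proof. by move=> h; rewrite -mulN1r; apply: idealM. Qed.

Lemma idealB gs p q : in_ideal gs p -> in_ideal gs q -> in_ideal gs (p - q).
Proof. by move=> hp hq; apply: idealD => //; apply: idealN. Qed.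

Lemma ideal_gen gs g : g \in gs -> in_ideal gs g.
Proof.
move=> /(nthP 0)[k hk <-]; apply/in_idealP.
exists (fun i => if i == k then 1 else 0).
rewrite (bigD1 (Ordinal hk)) //= eqxx mul1r big1 ?addr0 // => i /negbTE.
by rewrite -(inj_eq val_inj) /= => ->; rewrite mul0r.
Qed.

Lemma ideal_sum gs (I : Type) (r : seq I) (F : I -> S) :
  (forall i, in_ideal gs (F i)) -> in_ideal gs (\sum_(i <- r) F i).
Proof.
move=> h; elim: r => [|a r ih]; first by rewrite big_nil; apply: ideal0.
by rewrite big_cons; apply: idealD.
Qed.

Lemma ideal_ind gs (Q : S -> Prop) p : Q 0 -> (forall a b, Q a -> Q b -> Q (a + b)) ->
  (forall s g, g \in gs -> Q (s * g)) -> in_ideal gs p -> Q p.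
Proof.
move=> h0 hD hg /in_idealP[c ->]; apply: (big_ind Q) => // i _.
by apply: hg; apply: mem_nth.
Qed.


Lemma ideal_big gs (I : Type) (r : seq I) (P : pred I) (F : I -> S) :
  (forall i, P i -> in_ideal gs (F i)) -> in_ideal gs (\sum_(i <- r | P i) F i).
Proof. move=> h; apply: (big_ind (in_ideal gs)) => //; [exact: ideal0|exact: idealD]. Qed.

Definition mJ (ms : seq 'X_{1..n}) (m : 'X_{1..n}) := has (fun g => (g <= m)%MM) ms.

Lemma monomP ms p : in_ideal (monom_gens K ms) p <-> all (mJ ms) (msupp p).
Proof.
split.
  apply: (@ideal_ind _ (fun q => all (mJ ms) (msupp q))).
  - by move: (eqxx (0:S)); rewrite -msupp_eq0 => /eqP ->.
  - move=> a b ha hb; apply/allP => m /msuppD_le; rewrite mem_cat => /orP[].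
      by move/(allP ha).
    by move/(allP hb).
  - move=> s g /mapP[g' hg' ->]; apply/allP => m.
    rewrite (perm_mem (msuppMX _ _)) => /mapP[m' _ ->].
    by apply/hasP; exists g' => //; apply: lem_addr.
move=> h; rewrite [p]mpolyE big_seq; apply: ideal_big => m hm.
have /hasP[g hg hgm] := allP h m hm.
rewrite -(submK hgm) mpolyXD -mul_mpolyC mulrA; apply: idealM.
by apply: ideal_gen; apply: map_f.
Qed.


Definition restr (P : pred 'X_{1..n}) p : S :=
  \sum_(m <- msupp p | P m) p@_m *: 'X_[m].

Lemma restr_coef P p k : (restr P p)@_k = if P k then p@_k else 0.
Proof.
rewrite /restr raddf_sum /=.
have [hk|hk] := boolP (k \in msupp p).
  rewrite (big_rem k) //= big1_seq ?addr0.
    by case: (P k) => //; rewrite mcoeffZ mcoeffX eqxx mulr1.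
  move=> m /andP[_]; rewrite (mem_rem_uniq _ (msupp_uniq p)) inE => /andP[hmk _].
  by rewrite mcoeffZ mcoeffX (negbTE hmk) mulr0.
rewrite big1_seq; first by case: (P k) => //; rewrite memN_msupp_eq0.
move=> m /andP[_ hm]; rewrite mcoeffZ mcoeffX.
by case: eqP => [e|]; [rewrite -e hm in hk|rewrite mulr0].
Qed.

Lemma restr_supp P p m : m \in msupp (restr P p) -> P m && (m \in msupp p).
Proof. by rewrite !mcoeff_msupp restr_coef; case: (P m) => //; rewrite eqxx. Qed.

Lemma restr_split P p : p = restr P p + restr (predC P) p.
Proof.
apply/mpolyP => k; rewrite mcoeffD !restr_coef /=.
by case: (P k) => /=; rewrite ?addr0 ?add0r.
Qed.


Definition Ulist r : seq 'X_{1..n} := [seq U_(i)%MM | i <- [seq i <- enum 'I_n | (nat_of_ord i < r)%N]].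

Lemma var_gensE r : var_gens K n r = monom_gens K (Ulist r).
Proof. by rewrite /var_gens /monom_gens /Ulist -map_comp. Qed.

Definition mI r (m : 'X_{1..n}) := [exists i : 'I_n, (i < r)%N && (m i != 0%N)].

Lemma mJ_Ulist r m : mJ (Ulist r) m = mI r m.
Proof.
apply/hasP/existsP => [[g /mapP[i] ] |[i /andP[hi hm]]].
  rewrite mem_filter => /andP[hi _] -> hle; exists i; rewrite hi /=.
  by rewrite -lep1mP.
by exists U_(i)%MM; [apply: map_f; rewrite mem_filter hi mem_enum | rewrite lep1mP].
Qed.

Lemma varP r p : in_ideal (var_gens K n r) p <-> all (mI r) (msupp p).
Proof.
rewrite var_gensE monomP; split => /allP h; apply/allP => m /h; by rewrite mJ_Ulist.
Qed.

Lemma mdeg_le (m1 m2 : 'X_{1..n}) : (m1 <= m2)%MM -> (mdeg m1 <= mdeg m2)%N.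
Proof. by move=> h; rewrite -(submK h) mdegD leq_addl. Qed.

Lemma minJ ms p g : in_ideal (monom_gens K ms) (p * (1 - g)) -> g@_0%MM = 0 ->
  in_ideal (monom_gens K ms) p.
Proof.
move=> hp hg.
have hsplit := restr_split (mJ ms) p.
set q' := restr (predC (mJ ms)) p in hsplit.
have hJ1 : in_ideal (monom_gens K ms) (restr (mJ ms) p).
  by apply/monomP/allP => m /restr_supp /andP[].
have hq : in_ideal (monom_gens K ms) (q' * (1 - g)).
  have -> : q' * (1 - g) = p * (1 - g) - (1 - g) * restr (mJ ms) p.
    by rewrite {1}hsplit mulrDl (mulrC (1 - g)) addrAC subrr add0r.
  by apply: idealB => //; apply: idealM.
suff q0 : q' = 0 by rewrite hsplit q0 addr0.
apply/eqP; apply: contraT => nz.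
have ex : exists d, has (fun m => mdeg m == d) (msupp q').
  case E: (msupp q') => [|w s]; first by move/eqP: E; rewrite msupp_eq0 (negbTE nz).
  by exists (mdeg w); rewrite /= eqxx.
case: (ex_minnP ex) => d /hasP[w hw /eqP hwd] hmin.
have aux : forall a b : 'X_{1..n}, w = (a + b)%MM -> q'@_a * g@_b = 0.
  move=> a b wE.
  have [k20|k2n0] := eqVneq b 0%MM; first by rewrite k20 hg mulr0.
  suff -> : q'@_a = 0 by rewrite mul0r.
  apply: memN_msupp_eq0; apply/negP => hk1.
  have h1 : (d <= mdeg a)%N by apply: hmin; apply/hasP; exists a.
  have : (mdeg a < mdeg w)%N.
    by rewrite wE mdegD -{1}[mdeg a]addn0 ltn_add2l lt0n mdeg_eq0.
  by rewrite hwd ltnNge h1.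
have hc : (q' * (1 - g))@_w = q'@_w.
  by rewrite mulrBr mulr1 mcoeffB mcoeffM big1 ?subr0 // => k /eqP wE; apply: aux.
have : w \in msupp (q' * (1 - g)) by rewrite mcoeff_msupp hc -mcoeff_msupp.
move/monomP: hq => /allP h /h hJ.
by move: (restr_supp hw) => /andP[/= /negP].
Qed.


Definition mL r (m : 'X_{1..n}) := [exists j : 'I_n, (r <= j)%N && (m j != 0%N)].

Lemma mnm_nz (m : 'X_{1..n}) : m != 0%MM -> exists i : 'I_n, m i != 0%N.
Proof.
move=> h; apply/existsP; apply: contraR h => /existsPn h.
by apply/eqP/mnmP => i; rewrite mnm0E; move/negPn/eqP: (h i).
Qed.

Lemma mI0 r : mI r 0%MM = false.
Proof. by apply/existsP => -[i /andP[_]]; rewrite mnm0E eqxx. Qed.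

Lemma fsM0 (Ig Jg : seq S) p : in_fsM Ig Jg [::] p <-> in_ideal Jg p.
Proof.
split => [[a [_]]|h]; first by rewrite big_ord0 subr0.
by exists [::]; split => //; rewrite big_ord0 subr0.
Qed.

Lemma fsM1 (Ig Jg : seq S) f p : in_fsM Ig Jg [:: f] p <->
  exists a0, in_ideal Ig a0 /\ in_ideal Jg (p - f * a0).
Proof.
split => [[a [ha]]|[a0 [h1 h2]]].
  by rewrite big_ord1 /= => h; exists a`_0; split => //; apply: ha.
exists [:: a0]; split; first by case => // _.
by rewrite big_ord1.
Qed.

Lemma maxI (p : S) : p@_0%MM = 0 -> all (mI n) (msupp p).
Proof.
move=> h; apply/allP => m hm.
have : m != 0%MM by apply: contraTneq hm => ->; rewrite mcoeff_msupp h eqxx.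
by move/mnm_nz => [i hi]; apply/existsP; exists i; rewrite ltn_ord.
Qed.

Lemma I0 r (p : S) : in_ideal (var_gens K n r) p -> p@_0%MM = 0.
Proof.
move/varP/allP => h; apply/eqP; rewrite mcoeff_eq0; apply/negP => /h.
by rewrite mI0.
Qed.

Lemma XI r (i : 'I_n) : (i < r)%N -> in_ideal (var_gens K n r) ('X_i : S).
Proof.
move=> hi; apply/varP; rewrite msuppX /= andbT; apply/existsP; exists i.
by rewrite hi mnm1E eqxx.
Qed.

Section Main.
Variables (r : nat) (Jm : seq 'X_{1..n}).
Hypothesis H6 : forall m : 'X_{1..n}, squarefree m -> mdeg m = 2%N ->
      in_ideal (var_gens K n r) ('X_[m] : S) ->
      ~ in_ideal (monom_gens K Jm) 'X_[m] ->
      forall i : 'I_n, (0 < m i)%N -> (i < r)%N.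

Lemma HX m : mI r m -> mL r m -> mJ Jm m.
Proof.
move=> /existsP[i /andP[hi hmi]] /existsP[j /andP[hj hmj]].
have hij : i != j by apply: contraTneq hi => ->; rewrite -leqNgt.
pose mm := (U_(i) + U_(j))%MM.
have mmE k : mm k = ((i == k) + (j == k))%N by rewrite mnmDE !mnm1E.
have hle : (mm <= m)%MM.
  apply/mnm_lepP => k; rewrite mmE.
  case: (eqVneq i k) => [<-|hik]; first by rewrite eq_sym (negbTE hij) addn0 lt0n.
  by case: (eqVneq j k) => [<-|//]; rewrite lt0n.
suff : mJ Jm mm.
  by move/hasP => [g hg hgm]; apply/hasP; exists g => //; apply: lepm_trans hle.
case: (boolP (mJ Jm mm)) => // hn; exfalso.
have hsq : squarefree mm.
  move=> k; rewrite mmE; case: (eqVneq i k) => [<-|]; last by case: (j == k).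
  by rewrite eq_sym (negbTE hij).
have hdeg : mdeg mm = 2%N by rewrite mdegD !mdeg1.
have hI : in_ideal (var_gens K n r) ('X_[mm] : S).
  apply/varP; rewrite msuppX /= andbT; apply/existsP; exists i.
  by rewrite hi mmE eqxx.
have hJ : ~ in_ideal (monom_gens K Jm) ('X_[mm] : S).
  by move/monomP; rewrite msuppX /= andbT (negbTE hn).
have := H6 hsq hdeg hI hJ (i := j); rewrite mmE eqxx addn1 => /(_ isT).
by rewrite ltnNge hj.
Qed.

Lemma PM (a u : S) : all (mL r) (msupp a) -> all (mI r) (msupp u) ->
  in_ideal (monom_gens K Jm) (a * u).
Proof.
move=> /allP ha /allP hu; apply/monomP/allP => m /msuppM_le /allpairsP[[m1 m2] [/= h1 h2 ->]].
apply: HX.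
  move: (hu _ h2) => /existsP[i /andP[hi hm]]; apply/existsP; exists i.
  by rewrite hi mnmDE addn_eq0 negb_and hm orbT.
move: (ha _ h1) => /existsP[i /andP[hi hm]]; apply/existsP; exists i.
by rewrite hi mnmDE addn_eq0 negb_and hm.
Qed.

Hypothesis H5 : exists p : S, in_ideal (var_gens K n r) p /\ ~ in_ideal (monom_gens K Jm) p.

Lemma upper (fs : seq S) : (forall f, f \in fs -> in_max_ideal f) ->
  quot_regular_seq (var_gens K n r) (monom_gens K Jm) fs -> (size fs <= 1)%N.
Proof.
move=> hmax [hreg _].
case: fs hmax hreg => [|x [|y rest]] // hmax hreg; exfalso.
have hx : x@_0%MM = 0 by apply: hmax; rewrite inE eqxx.
have hy : y@_0%MM = 0 by apply: hmax; rewrite !inE eqxx orbT.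
pose h := restr (predC (mL r)) x.
pose d := restr (predC (predC (mL r))) x.
have hsplit : x = h + d by apply: restr_split.
have hd : all (mL r) (msupp d).
  by apply/allP => m /restr_supp /andP[/= /negPn].
have hI : all (mI r) (msupp h).
  apply/allP => m /restr_supp /andP[/= hL hm].
  have : m != 0%MM by apply: contraTneq hm => ->; rewrite mcoeff_msupp hx eqxx.
  move/mnm_nz => [i hi]; apply/existsP; exists i; rewrite hi andbT ltnNge.
  by apply: contra hL => hri; apply/existsP; exists i; rewrite hri.
have hIh : in_ideal (var_gens K n r) h by apply/varP.
have dJ u : in_ideal (var_gens K n r) u -> in_ideal (monom_gens K Jm) (d * u).
  by move/varP; apply: PM.
have key : in_fsM (var_gens K n r) (monom_gens K Jm) [:: x] (y * h).
  apply/fsM1.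
  have : in_ideal (var_gens K n n) y by apply/varP/maxI.
  apply: (@ideal_ind _ (fun q => exists a0, in_ideal (var_gens K n r) a0 /\
             in_ideal (monom_gens K Jm) (q * h - x * a0))).
  - by exists 0; split; [apply: ideal0|rewrite mul0r mulr0 subr0; apply: ideal0].
  - move=> a b [a0 [ha0 ha]] [b0 [hb0 hb]]; exists (a0 + b0); split; first exact: idealD.
    have -> : (a + b) * h - x * (a0 + b0) = (a * h - x * a0) + (b * h - x * b0) by ring.
    exact: idealD.
  - move=> s g /mapP[i _ ->].
    suff [a0 [ha0 ha]] : exists a0, in_ideal (var_gens K n r) a0 /\
             in_ideal (monom_gens K Jm) ('X_i * h - x * a0).
      exists (s * a0); split; first exact: idealM.
      have -> : s * 'X_i * h - x * (s * a0) = s * ('X_i * h - x * a0) by ring.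
      exact: idealM.
    case: (ltnP i r) => hir.
      exists 'X_i; split; first exact: XI.
      have -> : 'X_i * h - x * 'X_i = - (d * 'X_i) by rewrite hsplit; ring.
      by apply: idealN; apply: dJ; apply: XI.
    exists 0; split; first exact: ideal0.
    rewrite mulr0 subr0; apply: PM => //.
    rewrite msuppX /= andbT; apply/existsP; exists i; by rewrite hir mnm1E eqxx.
have := hreg 1%N isT h hIh key => /fsM1 [a0 [ha0 hJ]].
have hh : in_ideal (monom_gens K Jm) h.
  apply: (@minJ _ _ a0); last exact: I0 ha0.
  have -> : h * (1 - a0) = (h - x * a0) + d * a0 by rewrite hsplit; ring.
  by apply: idealD => //; apply: dJ.
case: H5 => u [hu hnu]; apply: hnu.
apply/fsM0; apply: (hreg 0%N isT u hu); apply/fsM0.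
rewrite hsplit mulrDl; apply: idealD; last exact: dJ.
by rewrite mulrC; apply: idealM.
Qed.

End Main.

Section Lower.
Variables (Jm : seq 'X_{1..n}) (i0 : 'I_n).
Hypothesis H2 : forall m, m \in Jm -> squarefree m /\ (2 <= mdeg m)%N.

Let f : S := \sum_(i < n) 'X_i.

Lemma f0 : f@_0%MM = 0.
Proof.
rewrite /f raddf_sum big1 // => i _ /=; by rewrite mcoeffX mnm1_eq0.
Qed.

Lemma L2 (u : S) : in_ideal (monom_gens K Jm) (f * u) -> in_ideal (monom_gens K Jm) u.
Proof.
move=> hfu.
have hsplit := restr_split (mJ Jm) u.
set u' := restr (predC (mJ Jm)) u in hsplit.
have hJ1 : in_ideal (monom_gens K Jm) (restr (mJ Jm) u).
  by apply/monomP/allP => m /restr_supp /andP[].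
suff q0 : u' = 0 by rewrite hsplit q0 addr0.
apply/eqP; apply: contraT => nz.
have hfu' : in_ideal (monom_gens K Jm) (f * u').
  have -> : f * u' = f * (restr (mJ Jm) u + u') - f * restr (mJ Jm) u by ring.
  by rewrite -hsplit; apply: idealB => //; apply: idealM.
pose w := mlead u'.
have hw : w \in msupp u' by apply: mlead_supp.
have hnJ : ~~ mJ Jm w by move: (restr_supp hw) => /andP[].
have [i hi] : exists i : 'I_n, (w == 0%MM) || ((w i != 0%N) &&
    [forall j : 'I_n, (j != i) ==> (w j != 0%N) ==> ((U_(j))%MM < (U_(i))%MM)%O]).
  case: (eqVneq w 0%MM) => [->|/mnm_nz [j hj]]; first by exists i0.
  case: (@Order.TotalTheory.arg_maxP _ _ _ j (fun k => w k != 0%N) (fun k => (U_(k))%MM) hj).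
  move=> k hk hmax; exists k; rewrite /= hk /=; apply/forallP => l; apply/implyP => hlk.
  apply/implyP => hl; rewrite Order.POrderTheory.lt_neqAle; apply/andP; split; last exact: hmax.
  apply: contra hlk => /eqP e; apply/eqP.
  by have := congr1 (fun m : 'X_{1..n} => m l) e; rewrite !mnm1E eqxx eq_sym; case: eqP.
have hc : (f * u')@_(U_(i) + w)%MM = u'@_w.
  rewrite /f mulr_suml raddf_sum (bigD1 i) //= big1 ?addr0.
    by rewrite mulrC mcoeffMX.
  move=> j hji; rewrite mulrC.
  case: (boolP (w j != 0%N)) => hwj.
    have hle : (U_(j) <= w)%MM by rewrite lep1mP.
    have -> : (U_(i) + w = U_(j) + (U_(i) + (w - U_(j))))%MM.
      apply/mnmP => k; rewrite !mnmDE mnmBE; move/mnm_lepP: hle => /(_ k) hk.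
      by rewrite addnCA subnKC.
    rewrite mcoeffMX; apply: mcoeff_gt_mlead.
    rewrite -/w -{1}(submK hle) [(_ - _ + _)%MM]addmC ltmc_add2l.
    case/orP: hi => [/eqP w0|/andP[_ /forallP /(_ j)]]; first by move: hwj; rewrite w0 mnm0E.
    by rewrite hji hwj.
  apply: memN_msupp_eq0; rewrite (perm_mem (msuppMX _ _)); apply/negP => /mapP[m' _] /mnmP /(_ j).
  rewrite !mnmDE !mnm1E eq_sym (negbTE hji) eqxx; move/negPn/eqP: hwj => ->.
  by [].
have : (U_(i) + w)%MM \in msupp (f * u') by rewrite mcoeff_msupp hc -mcoeff_msupp.
move/monomP: hfu' => /allP h /h /hasP [g hg hgw].
case: (H2 hg) => hsq hdeg.
case/orP: hi => [/eqP w0|/andP[hwi _]].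
  move: hgw; rewrite w0 addm0 => hgw; have := mdeg_le hgw.
  by rewrite mdeg1 => hle; have := leq_trans hdeg hle.
case/negP: hnJ; apply/hasP; exists g => //; apply/mnm_lepP => k.
case: (eqVneq i k) => [<-|hik]; first by apply: leq_trans (hsq i) _; rewrite lt0n.
by move/mnm_lepP: hgw => /(_ k); rewrite mnmDE mnm1E (negbTE hik).
Qed.

End Lower.

End Aux.

Theorem lemma1p13 (K : fieldType) (n r : nat) (Jm : seq 'X_{1..n}) :
  (1 <= r <= n)%N ->
  (* J is generated by square free monomials of degree >= 2 *)
  (forall m, m \in Jm -> squarefree m /\ (2 <= mdeg m)%N) ->
  (* J is nonzero *)
  Jm != [::] ->
  (* J is strictly contained in I = (x_1,...,x_r) *)
  (forall p : {mpoly K[n]}, in_ideal (monom_gens K Jm) p -> in_ideal (var_gens K n r) p) ->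
  (exists p : {mpoly K[n]}, in_ideal (var_gens K n r) p /\ ~ in_ideal (monom_gens K Jm) p) ->
  (* square free degree-2 monomials in I \ J lie in K[x_1,...,x_r] *)
  (forall m : 'X_{1..n}, squarefree m -> mdeg m = 2%N ->
      in_ideal (var_gens K n r) ('X_[m] : {mpoly K[n]}) ->
      ~ in_ideal (monom_gens K Jm) 'X_[m] ->
      forall i : 'I_n, (0 < m i)%N -> (i < r)%N) ->
  quot_depth_is (var_gens K n r) (monom_gens K Jm) 1.
Proof.
move=> /andP[h1r hrn] H2 _ _ H5 H6.
have hn : (0 < n)%N := leq_trans h1r hrn.
pose i0 : 'I_n := Ordinal hn.
split; last first.
  by move=> fs hmax hreg; apply: (upper H6 H5 hmax hreg).
set f : {mpoly K[n]} := \sum_(i < n) 'X_i.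
have hf0 : f@_0%MM = 0 by apply: f0.
exists [:: f]; split => //; split.
  by move=> g; rewrite inE => /eqP ->.
split.
  case => // _ u hu /fsM0 h; apply/fsM0; exact: (L2 i0 H2 h).
exists 'X_i0; split; first exact: XI.
move/fsM1 => [a0 [ha0 hJ]].
have ha00 := I0 ha0.
have hc : (f * a0)@_(U_(i0))%MM = 0.
  apply: memN_msupp_eq0; apply/negP => /msuppM_le /allpairsP [[m1 m2] [/= hm1 hm2 e]].
  have nz1 : m1 != 0%MM by apply: contraTneq hm1 => ->; rewrite mcoeff_msupp hf0 eqxx.
  have nz2 : m2 != 0%MM by apply: contraTneq hm2 => ->; rewrite mcoeff_msupp ha00 eqxx.
  have := congr1 mdeg e; rewrite mdeg1 mdegD.
  move: nz1 nz2; rewrite -!mdeg_eq0 -!lt0n.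
  by case: (mdeg m1) => // a; case: (mdeg m2) => // b _ _; rewrite addSn addnS.
have : (U_(i0))%MM \in msupp ('X_i0 - f * a0).
  by rewrite mcoeff_msupp mcoeffB hc subr0 mcoeffX eqxx oner_neq0.
move/monomP: hJ => /allP h /h /hasP [g hg hgw].
case: (H2 _ hg) => _ hdeg.
by have := leq_trans hdeg (mdeg_le hgw); rewrite mdeg1.
Qed.
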